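(* Let $D$ be a square-free integer, let $\mathbb{Z}[\sqrt{D}]$ denote the ring of integers of $\mathbb{Q}(\sqrt{D})$, and let $p$ be a prime integer which is irreducible but not prime in $\mathbb{Z}[\sqrt{D}]$. Let $z\in I_p(D)$ with $\lVert z\rVert=-p^2$. Then $\gcd(z_1,z_2D)=1$, where $z_1,z_2\in\mathbb{Z}$ are such that $z=z_1+z_2\sqrt{D}$ or $z=\frac{z_1+z_2\sqrt{D}}{2}$ (with $z_1,z_2$ odd, $D\equiv 1\pmod 4$).
   Context: $\mathbb{Z}[\sqrt{D}]=\{a+b\sqrt{D}:a,b\in\mathbb{Z}\}$ if $D\equiv 2,3 \pmod 4$ and $\{\frac{a+b\sqrt{D}}{2}:a,b\in\mathbb{Z},a\equiv b \pmod 2\}$ if $D\equiv 1\pmod 4$. $\lVert z\rVert=z\bar z$ is the norm. $I_p(D)$ is the set of all non-unit $z\in\mathbb{Z}[\sqrt{D}]$ such that $z\notin\langle p\rangle$ but there exists $m\notin\langle p\rangle$ with $zm\in\langle p\rangle$. *)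

(* Defs.v *)
(* Elements of the ring of integers O_D of Q(sqrt D) are
   represented in "half coordinates": the pair (a, b) : Z * Z stands for
   (a + b sqrt D) / 2.  Membership in O_D is the predicate [inO D]. *)
From Stdlib Require Import ZArith Znumtheory.
Open Scope Z_scope.

Definition squarefree (D : Z) : Prop :=
  forall k : Z, (k * k | D) -> k * k = 1.

(* (a + b sqrt D)/2 lies in O_D :
   D = 1 mod 4 : a = b mod 2 ;  otherwise a, b even (element a/2 + b/2 sqrt D). *)
Definition inO (D : Z) (z : Z * Z) : Prop :=
  if Z.eqb (D mod 4) 1 then Z.even (fst z - snd z) = true
  else Z.even (fst z) = true /\ Z.even (snd z) = true.

(* product of (a + b sqrt D)/2 and (c + d sqrt D)/2 = ((ac + D bd) + (ad + bc) sqrt D)/4;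
   the divisions by 2 are exact on elements of O_D. *)
Definition mulO (D : Z) (z w : Z * Z) : Z * Z :=
  ((fst z * fst w + D * snd z * snd w) / 2, (fst z * snd w + snd z * fst w) / 2).

Definition oneO : Z * Z := (2, 0).
Definition zeroO : Z * Z := (0, 0).
Definition ofZ (n : Z) : Z * Z := (2 * n, 0).

Definition normO (D : Z) (z : Z * Z) : Z :=
  (fst z * fst z - D * snd z * snd z) / 4.

Definition unitO (D : Z) (z : Z * Z) : Prop :=
  exists w, inO D w /\ mulO D z w = oneO.

Definition divO (D : Z) (d z : Z * Z) : Prop :=
  exists w, inO D w /\ z = mulO D d w.

Definition irreducibleO (D : Z) (x : Z * Z) : Prop :=
  x <> zeroO /\ ~ unitO D x /\
  forall y w, inO D y -> inO D w -> x = mulO D y w -> unitO D y \/ unitO D w.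

Definition primeO (D : Z) (x : Z * Z) : Prop :=
  x <> zeroO /\ ~ unitO D x /\
  forall y w, inO D y -> inO D w -> divO D x (mulO D y w) -> divO D x y \/ divO D x w.

Definition I_p (D p : Z) (z : Z * Z) : Prop :=
  inO D z /\ ~ unitO D z /\ ~ divO D (ofZ p) z /\
  exists m, inO D m /\ ~ divO D (ofZ p) m /\ divO D (ofZ p) (mulO D z m).

(* the integers z1, z2 with z = z1 + z2 sqrt D, or z = (z1 + z2 sqrt D)/2 with
   z1, z2 odd (only possible when D = 1 mod 4) *)
Definition coord1 (z : Z * Z) : Z :=
  if Z.odd (fst z) then fst z else fst z / 2.
Definition coord2 (z : Z * Z) : Z :=
  if Z.odd (fst z) then snd z else snd z / 2.

(* Main.v *)
From Stdlib Require Import ZArith Znumtheory Lia.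
Require Import Defs.
Open Scope Z_scope.

Lemma prime_divisor_ex n : 1 < n -> exists q, prime q /\ (q | n).
Proof.
  assert (H : forall n, 0 <= n -> 1 < n -> exists q, prime q /\ (q | n)).
  { apply (Z_lt_induction (fun n => 1 < n -> exists q, prime q /\ (q | n))).
    intros x IH Hx. destruct (prime_dec x) as [Hp|Hp].
    - exists x. split; [exact Hp| apply Z.divide_refl].
    - destruct (not_prime_divide x Hx Hp) as [m [Hm Hmx]].
      destruct (IH m ltac:(lia) ltac:(lia)) as [q [Hq Hqm]].
      exists q. split; [exact Hq|]. eapply Z.divide_trans; eauto. }
  intro; apply H; lia.
Qed.

Lemma prime_gt1 q : prime q -> 1 < q.
Proof. intros [H _]; exact H. Qed.

Lemma q_is_p p q c x : prime p -> prime q ->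
  (c = 1 \/ (c = 4 /\ Z.odd x = true)) -> (q | x) -> (q | c * p * p) -> q = p.
Proof.
  intros Hp Hq Hc Hqx Hd.
  apply prime_mult in Hd; auto. destruct Hd as [Hd|Hd].
  - apply prime_mult in Hd; auto. destruct Hd as [Hd|Hd].
    + exfalso. destruct Hc as [->|[-> Hodd]].
      * apply Z.divide_1_r in Hd. apply prime_gt1 in Hq. lia.
      * change 4 with (2*2) in Hd. apply prime_mult in Hd; auto.
        assert (q = 2) by (destruct Hd; apply prime_div_prime; auto using prime_2).
        subst q. destruct Hqx as [k ->]. rewrite Z.odd_mul in Hodd. simpl in Hodd.
        rewrite Bool.andb_false_r in Hodd. discriminate.
    + apply prime_div_prime; auto.
  - apply prime_div_prime; auto.
Qed.

Lemma key D p x y c : squarefree D -> prime p ->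
  (c = 1 \/ (c = 4 /\ Z.odd x = true)) ->
  x*x - D*y*y = -(c*p*p) -> ~((p|x) /\ (p|y)) -> Z.gcd x (y*D) = 1.
Proof.
  intros Hsf Hp Hc Hn Hnd.
  assert (Hp1 := prime_gt1 _ Hp).
  assert (Hcp : c * p * p <> 0) by (destruct Hc as [->|[-> _]]; nia).
  assert (Hg := Z.gcd_nonneg x (y*D)).
  destruct (Z.eq_dec (Z.gcd x (y*D)) 0) as [H0|H0].
  { apply Z.gcd_eq_0 in H0. destruct H0 as [-> H0].
    exfalso. apply Hcp. replace (D*y*y) with ((y*D)*y) in Hn by ring. rewrite H0 in Hn. lia. }
  destruct (Z.eq_dec (Z.gcd x (y*D)) 1) as [H1|H1]; [exact H1|].
  exfalso.
  destruct (prime_divisor_ex (Z.gcd x (y*D)) ltac:(lia)) as [q [Hq Hqg]].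
  assert (Hqx : (q | x)) by (eapply Z.divide_trans; [exact Hqg| apply Z.gcd_divide_l]).
  assert (Hqy : (q | y*D)) by (eapply Z.divide_trans; [exact Hqg| apply Z.gcd_divide_r]).
  assert (Hcp2 : c*p*p = D*y*y - x*x) by lia.
  assert (Hqcp : (q | c*p*p)).
  { rewrite Hcp2. apply Z.divide_sub_r.
    - replace (D*y*y) with ((y*D)*y) by ring. apply Z.divide_mul_l; exact Hqy.
    - apply Z.divide_mul_l; exact Hqx. }
  assert (Hqp := q_is_p p q c x Hp Hq Hc Hqx Hqcp). subst q.
  apply prime_mult in Hqy; auto. destruct Hqy as [Hy|HD].
  - apply Hnd; split; auto.
  - apply Hnd; split; auto.
    destruct HD as [D' ->]. destruct Hqx as [x' ->].
    (* D' p y^2 = p^2 (x'^2 + c) *)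
    assert (HE : D' * (y*y) = p * (x'*x' + c)).
    { apply (Z.mul_reg_l _ _ p); [lia|]. nia. }
    assert (Hd : (p | D' * (y*y))) by (rewrite HE; apply Z.divide_factor_l).
    apply prime_mult in Hd; auto. destruct Hd as [Hd|Hd].
    + exfalso. destruct Hd as [t ->].
      assert (p*p = 1). { apply Hsf. exists t. ring. } nia.
    + apply prime_mult in Hd; auto. destruct Hd; auto.
Qed.

Theorem lemma3p4 (D p : Z) (z : Z * Z) :
  squarefree D -> D <> 1 ->
  prime p ->
  irreducibleO D (ofZ p) -> ~ primeO D (ofZ p) ->
  I_p D p z -> normO D z = - (p * p) ->
  Z.gcd (coord1 z) (coord2 z * D) = 1.
Proof.
  intros Hsf _ Hp _ _ [Hin [_ [Hnd _]]] Hnorm.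
  assert (Hp1 := prime_gt1 _ Hp).
  destruct z as [a b]. unfold coord1, coord2, normO, inO in *; simpl in *.
  destruct (Z.odd a) eqn:Ha.
  - destruct (Z.eqb (D mod 4) 1) eqn:HD.
    2:{ destruct Hin as [He _]. rewrite <- Z.negb_odd, Ha in He. discriminate. }
    assert (Hb : Z.odd b = true).
    { rewrite Z.even_sub, <- !Z.negb_odd, Ha in Hin. destruct (Z.odd b); auto. }
    assert (Ha0 := Ha). assert (Hb0 := Hb).
    apply Z.eqb_eq in HD.
    apply Zodd_bool_iff in Ha. apply Zodd_bool_iff in Hb. apply Zodd_ex in Ha, Hb.
    destruct Ha as [k Ha]. destruct Hb as [l Hb].
    assert (HD' : D = 4 * (D / 4) + 1) by (rewrite <- HD; apply Z.div_mod; lia).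
    set (m := D / 4) in HD'.
    assert (HN : a*a - D*b*b = (k*k+k - m*(4*l*l+4*l+1) - l*l - l) * 4).
    { rewrite Ha, Hb, HD'. ring. }
    rewrite HN, Z_div_mult in Hnorm by lia.
    apply (key D p a b 4); auto.
    + lia.
    + intros [[a' Ha'] [b' Hb']]. apply Hnd. exists (a', b'). split.
      * unfold inO. rewrite HD. simpl.
        rewrite Ha', Z.odd_mul in Ha0. rewrite Hb', Z.odd_mul in Hb0.
        rewrite Z.even_sub, <- !Z.negb_odd.
        destruct (Z.odd a'), (Z.odd b'); simpl in *; congruence.
      * unfold mulO, ofZ; cbn [fst snd]. f_equal.
        -- rewrite Ha'. replace (2 * p * a' + D * 0 * b') with ((p*a')*2) by ring.
           rewrite Z_div_mult by lia. ring.
        -- rewrite Hb'. replace (2 * p * b' + 0 * a') with ((p*b')*2) by ring.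
           rewrite Z_div_mult by lia. ring.
  - assert (Hae : Z.even a = true) by (rewrite <- Z.negb_odd, Ha; reflexivity).
    assert (Hbe : Z.even b = true).
    { destruct (Z.eqb (D mod 4) 1).
      - rewrite Z.even_sub, Hae in Hin. destruct (Z.even b); auto.
      - tauto. }
    apply Zeven_bool_iff, Zeven_ex in Hae, Hbe.
    destruct Hae as [k Hk]. destruct Hbe as [l Hl]. subst a b.
    replace (2*k/2) with k by (rewrite Z.mul_comm, Z_div_mult; lia).
    replace (2*l/2) with l by (rewrite Z.mul_comm, Z_div_mult; lia).
    replace (2 * k * (2 * k) - D * (2 * l) * (2 * l)) with ((k*k - D*l*l)*4) in Hnorm by ring.
    rewrite Z_div_mult in Hnorm by lia.
    apply (key D p k l 1); auto. lia.
    intros [[a' Ha'] [b' Hb']]. apply Hnd. exists (2*a', 2*b'). split.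
    * unfold inO. cbn [fst snd]. destruct (Z.eqb (D mod 4) 1).
      -- rewrite <- Z.mul_sub_distr_l. apply Z.even_mul.
      -- split; rewrite Z.even_mul; reflexivity.
    * unfold mulO, ofZ; cbn [fst snd]. subst k l. f_equal.
      -- replace (2 * p * (2 * a') + D * 0 * (2 * b')) with ((2*(a'*p))*2) by ring.
         rewrite Z_div_mult by lia. reflexivity.
      -- replace (2 * p * (2 * b') + 0 * (2 * a')) with ((2*(b'*p))*2) by ring.
         rewrite Z_div_mult by lia. reflexivity.
Qed.
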